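(* Let $G$ be a graph that contains no induced $C_5$, no induced bull, and no induced anchor. Then $G$ is pure. Moreover, every shortest odd hole in $G$ is clean.
   Context: All graphs are finite and simple. The bull is the graph consisting of a triangle with two disjoint pendant edges. An anchor is a six-vertex graph consisting of a 4-vertex induced path $P$, a vertex $c$ adjacent to all vertices of $P$, and a vertex $a$ adjacent to no vertex of $P$ (with $a,c$ either adjacent or not). A hole is an induced subgraph isomorphic to a cycle $C_k$ with $k\ge4$; it is odd if $k$ is odd. A shortest odd hole of $G$ is an odd hole of minimum length. A hole $C$ in $G$ is clean if for every $v\in V(G)\setminus V(C)$, the set of neighbours of $v$ in $V(C)$ is contained in the vertex set of some two-edge path of $C$. $G$ is pure if either $G$ contains no odd hole, or $G$ contains a shortest odd hole that is clean. *)

(* Defs.v *)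
From mathcomp Require Import all_boot.
Set Implicit Arguments. Unset Strict Implicit. Unset Printing Implicit Defensive.

Definition simple_graph (T : finType) (e : rel T) : Prop :=
  symmetric e /\ irreflexive e.

Definition induced_copy (H T : finType) (eH : rel H) (e : rel T) (f : H -> T) : Prop :=
  injective f /\ forall x y : H, e (f x) (f y) = eH x y.

Definition contains_induced (H T : finType) (eH : rel H) (e : rel T) : Prop :=
  exists f : H -> T, induced_copy eH e f.

Definition edges_rel (n : nat) (s : seq (nat * nat)) : rel 'I_n :=
  fun i j => ((nat_of_ord i, nat_of_ord j) \in s) || ((nat_of_ord j, nat_of_ord i) \in s).

Definition cyc_adj (k : nat) : rel 'I_k :=
  fun i j => (nat_of_ord j == (i.+1 %% k)) || (nat_of_ord i == (j.+1 %% k)).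

Definition C5 : rel 'I_5 := @cyc_adj 5.

Definition bull : rel 'I_5 := @edges_rel 5 [:: (0,1); (1,2); (0,2); (1,3); (2,4)].

(* anchor: induced path 0-1-2-3, c = 4 adjacent to 0,1,2,3; a = 5 adjacent to
   none of 0..3; a and c adjacent iff b *)
Definition anchor (b : bool) : rel 'I_6 :=
  @edges_rel 6 ([:: (0,1); (1,2); (2,3); (4,0); (4,1); (4,2); (4,3)]
               ++ (if b then [:: (4,5)] else [::])).

Definition hole (T : finType) (e : rel T) (k : nat) (c : 'I_k -> T) : Prop :=
  4 <= k /\ induced_copy (@cyc_adj k) e c.

Definition odd_hole (T : finType) (e : rel T) (k : nat) (c : 'I_k -> T) : Prop :=
  hole e c /\ odd k.

Definition has_odd_hole (T : finType) (e : rel T) : Prop :=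
  exists k (c : 'I_k -> T), odd_hole e c.

Definition shortest_odd_hole (T : finType) (e : rel T) (k : nat) (c : 'I_k -> T) : Prop :=
  odd_hole e c /\ forall k' (c' : 'I_k' -> T), odd_hole e c' -> k <= k'.

(* clean: every vertex v outside the hole has its neighbours on the hole
   contained in {c (i-1), c i, c (i+1)} for some i (a two-edge path of C). *)
Definition clean (T : finType) (e : rel T) (k : nat) (c : 'I_k -> T) : Prop :=
  forall v : T, (forall i, c i != v) ->
    exists i : 'I_k, forall j : 'I_k, e v (c j) ->
      [|| nat_of_ord j == nat_of_ord i, nat_of_ord j == (i.+1 %% k)
        | nat_of_ord i == (j.+1 %% k)].

Definition pure (T : finType) (e : rel T) : Prop :=
  ~ has_odd_hole e \/ exists k (c : 'I_k -> T), shortest_odd_hole e c /\ clean e c.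

(* Main.v *)
Require Import Defs.
From mathcomp Require Import all_boot zify.
From Stdlib Require Import Classical.
Set Implicit Arguments. Unset Strict Implicit. Unset Printing Implicit Defensive.

Definition pat (H : Type) (pos : H -> option nat) (adjv : nat -> bool) (x y : H) : bool :=
  match pos x, pos y with
  | Some a, Some b => (b == a.+1) || (a == b.+1)
  | Some a, None => adjv a
  | None, Some b => adjv b
  | None, None => false
  end.

Section Hole.
Variables (T : finType) (e : rel T).
Hypothesis esym : symmetric e.
Hypothesis eirr : irreflexive e.
Variables (k : nat) (c : 'I_k -> T).
Hypothesis k7 : 7 <= k.
Hypothesis cinj : injective c.
Hypothesis cadj : forall x y, e (c x) (c y) = cyc_adj x y.
Variable v : T.
Hypothesis vnot : forall i, c i != v.

Lemma kpos : 0 < k. Proof. by apply: leq_trans k7. Qed.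
Definition idx (n : nat) : 'I_k := Ordinal (ltn_pmod n kpos).
Definition A n := e v (c (idx n)).

Lemma idx_eq i a b : a < k -> b < k -> (idx (i+a) == idx (i+b)) = (a == b).
Proof. by move=> ha hb; rewrite -val_eqE /= eqn_modDl !modn_small. Qed.

Lemma cyc_idx i a b : a.+1 < k -> b.+1 < k ->
  cyc_adj (idx (i+a)) (idx (i+b)) = (b == a.+1) || (a == b.+1).
Proof.
move=> ha hb; rewrite /cyc_adj /=.
have E : forall x, (x %% k).+1 %% k = x.+1 %% k by move=> x; rewrite -addn1 modnDml addn1.
rewrite !E -!addnS !eqn_modDl !modn_small //; lia.
Qed.

Lemma idx_per n : idx (n + k) = idx n.
Proof. by apply: val_inj; rewrite /= modnDr. Qed.

Lemma A_per n : A (n + k) = A n.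
Proof. by rewrite /A idx_per. Qed.

Lemma embed_pat (H : finType) (eH : rel H) (pos : H -> option nat) (i : nat)
  (adjv : nat -> bool) :
  (forall x a, pos x = Some a -> a.+1 < k) ->
  (forall x a, pos x = Some a -> A (i+a) = adjv a) ->
  (forall x y, eH x y = pat pos adjv x y) ->
  (forall x y, pos x = pos y -> x = y) ->
  contains_induced eH e.
Proof.
move=> hk hA hE hI.
exists (fun x => match pos x with Some a => c (idx (i+a)) | None => v end).
split.
- move=> x y /=; case Ex: (pos x) => [a|]; case Ey: (pos y) => [b|] => Hxy.
  + apply: hI; rewrite Ex Ey; have := cinj Hxy; move/eqP.
    by rewrite idx_eq ?(ltnW (hk _ _ Ex)) ?(ltnW (hk _ _ Ey)) // => /eqP ->.
  + by move: (vnot (idx (i+a))); rewrite Hxy eqxx.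
  + by move: (vnot (idx (i+b))); rewrite Hxy eqxx.
  + by apply: hI; rewrite Ex Ey.
- move=> x y; rewrite hE /pat; case Ex: (pos x) => [a|]; case Ey: (pos y) => [b|].
  + by rewrite cadj cyc_idx ?(hk _ _ Ex) ?(hk _ _ Ey).
  + by rewrite esym; exact: hA _ _ Ex.
  + exact: hA _ _ Ey.
  + exact: eirr.
Qed.


Lemma short_hole i L : odd L -> 3 <= L -> L + 4 <= k -> A i -> A (i+L) ->
  (forall m, 0 < m < L -> A (i+m) = false) -> exists c' : 'I_(L+2) -> T, odd_hole e c'.
Proof.
move=> oL L3 Lk Ai AL Am.
have [f hf] : contains_induced (@cyc_adj (L+2)) e.
  apply: (@embed_pat _ _ (fun m : 'I_(L+2) => if nat_of_ord m <= L then Some (nat_of_ord m) else None) i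
           (fun a => (a == 0) || (a == L))).
  - by move=> x a; case: ifP => // hx [<-]; lia.
  - move=> x a; case: ifP => // hx [<-].
    have [->|x0] := posnP x; first by rewrite addn0 Ai.
    have [xL|xL|->] := ltngtP x L.
    + by rewrite Am ?x0 ?xL.
    + lia.
    + by rewrite AL.
  - move=> x y; rewrite /cyc_adj /pat.
    have hx' := ltn_ord x; have hy' := ltn_ord y.
    have M : (L+1).+1 %% (L+2) = 0 by rewrite -addnS modnn.
    case: ifP=> hx; case: ifP => hy.
    + rewrite !modn_small //; lia.
    + have -> : nat_of_ord y = L+1 by lia.
      rewrite M modn_small; last by lia.
      apply/idP/idP; lia.
    + have -> : nat_of_ord x = L+1 by lia.
      rewrite M modn_small; last by lia.
      apply/idP/idP; lia.
    + have -> : nat_of_ord x = L+1 by lia.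
      have -> : nat_of_ord y = L+1 by lia.
      by rewrite M; apply/idP/idP; lia.
  - move=> x y; case: ifP => hx; case: ifP => hy //.
    + by case=> /ord_inj.
    + move=> _; apply: ord_inj; have hx' := ltn_ord x; have hy' := ltn_ord y; lia.
exists f; split; [split => //; lia | by rewrite oddD oL].
Qed.


Definition posb (x : 'I_5) : option nat := nth None [:: None; Some 1; Some 2; Some 0; Some 3] x.
Definition adjb (a : nat) := (a == 1) || (a == 2).
Lemma bull_pat : [forall x, forall y, bull x y == pat posb adjb x y]. Proof. apply/forallP => x; apply/forallP => y; case: x => [[|[|[|[|[|?]]]]] ?]; case: y => [[|[|[|[|[|?]]]]] ?] //. Qed.
Lemma posb_inj : [forall x, forall y, (posb x == posb y) ==> (x == y)]. Proof. apply/forallP => x; apply/forallP => y; case: x => [[|[|[|[|[|?]]]]] ?]; case: y => [[|[|[|[|[|?]]]]] ?] //. Qed.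

Definition posa (x : 'I_6) : option nat := nth None [:: Some 0; Some 1; Some 2; Some 3; None; Some 5] x.
Definition adja b (a : nat) := (a < 4) || ((a == 5) && b).
Lemma anchor_pat b : [forall x, forall y, anchor b x y == pat posa (adja b) x y].
Proof. case: b; apply/forallP => x; apply/forallP => y; case: x => [[|[|[|[|[|[|?]]]]]] ?]; case: y => [[|[|[|[|[|[|?]]]]]] ?] //. Qed.
Lemma posa_inj : [forall x, forall y, (posa x == posa y) ==> (x == y)]. Proof. apply/forallP => x; apply/forallP => y; case: x => [[|[|[|[|[|[|?]]]]]] ?]; case: y => [[|[|[|[|[|[|?]]]]]] ?] //. Qed.

Lemma bull_at i : A i = false -> A (i+1) -> A (i+2) -> A (i+3) = false ->
  contains_induced bull e.
Proof.
move=> h0 h1 h2 h3.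
apply: (@embed_pat _ _ posb i adjb).
- by move=> x a; case: x => [[|[|[|[|[|?]]]]] ?] //=; move=> H; (discriminate || (injection H as <-)); lia.
- by move=> x a; case: x => [[|[|[|[|[|?]]]]] ?] //=; move=> H; (discriminate || (injection H as <-)); rewrite ?addn0.
- move=> x y; apply/eqP; move/forallP: bull_pat => /(_ x)/forallP/(_ y); exact.
- move=> x y H; apply/eqP; move/forallP: posb_inj => /(_ x)/forallP/(_ y)/implyP; apply.
  by rewrite H.
Qed.

Lemma anchor_at i : A i -> A (i+1) -> A (i+2) -> A (i+3) ->
  contains_induced (anchor (A (i+5))) e.
Proof.
move=> h0 h1 h2 h3.
apply: (@embed_pat _ _ posa i (adja (A (i+5)))).
- by move=> x a; case: x => [[|[|[|[|[|[|?]]]]]] ?] //=; move=> H; (discriminate || (injection H as <-)); lia.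
- by move=> x a; case: x => [[|[|[|[|[|[|?]]]]]] ?] //=; move=> H; (discriminate || (injection H as <-)); rewrite ?addn0 /adja //= andbT.
- move=> x y; apply/eqP; move/forallP: (anchor_pat (A (i+5))) => /(_ x)/forallP/(_ y); exact.
- move=> x y H; apply/eqP; move/forallP: posa_inj => /(_ x)/forallP/(_ y)/implyP; apply.
  by rewrite H.
Qed.


Hypothesis kodd : odd k.
Hypothesis nobull : ~ contains_induced bull e.
Hypothesis noanchor : forall b, ~ contains_induced (anchor b) e.
Hypothesis shortest : forall k' (c' : 'I_k' -> T), odd_hole e c' -> k <= k'.

Definition cleanv := exists i : 'I_k, forall j : 'I_k, e v (c j) ->
      [|| nat_of_ord j == nat_of_ord i, nat_of_ord j == (i.+1 %% k)
        | nat_of_ord i == (j.+1 %% k)].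
Hypothesis notclean : ~ cleanv.

Lemma modSk x : (x %% k).+1 %% k = x.+1 %% k.
Proof. by rewrite -addn1 modnDml addn1. Qed.

Lemma cover i (j : 'I_k) : exists2 m, m < k & idx (i+m) = j.
Proof.
have hj := ltn_ord j.
have hr := ltn_pmod i kpos.
have E : forall m, idx (i+m) = idx (i %% k + m).
  by move=> m; apply: val_inj; rewrite /= {1}(divn_eq i k) -addnA modnMDl.
move: hr; move: (i %% k) (E) => r Er hr.
exists (if r <= j then j - r else j + k - r).
  by case: ifP => h; lia.
rewrite Er; apply: val_inj => /=.
case: ifP => h.
- have -> : r + (j - r) = j by lia.
  by rewrite modn_small.
- have -> : r + (j + k - r) = j + k by lia.
  by rewrite modnDr modn_small.
Qed.

Lemma clean_of i p :
  (forall m, m < k -> A (i+m) ->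
     [|| idx (i+m) == idx p, idx (i+m) == idx (p+1) | idx (i+m) == idx (p+2)]) ->
  cleanv.
Proof.
move=> H; exists (idx (p+1)) => j Aj.
have [m mk hm] := cover i j.
have := H m mk; rewrite /A hm Aj => /(_ isT).
rewrite -!val_eqE /=.
case/or3P => /eqP ->.
- by rewrite !modSk !addn1 eqxx !orbT.
- by rewrite eqxx.
- by rewrite !modSk !addn1 addn2 eqxx !orbT.
Qed.

Lemma A_perm n q : A (n + q * k) = A n.
Proof.
elim: q => [|q IH]; first by rewrite mul0n addn0.
by rewrite mulSnr addnA A_per.
Qed.

Lemma exT : exists n, A n.
Proof.
apply: NNPP => H; apply: notclean; apply: (@clean_of 0 0) => m _ Am.
by exfalso; apply: H; exists (0 + m).
Qed.

Lemma notallT : ~ (forall n, A n).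
Proof.
move=> H; apply: (noanchor (b := A (0+5))); apply: anchor_at; exact: H.
Qed.

Definition P i t := A (i+t) != A (i+t).+1.

Lemma ex_trans i : exists t, P i t.
Proof.
apply: NNPP => H.
have c1 : forall t, A (i+t) = A i.
  elim=> [|t IH]; first by rewrite addn0.
  rewrite addnS; apply/eqP; rewrite -IH eq_sym; apply/negPn/negP => Ht.
  by apply: H; exists t.
have c2 : forall n, A n = A i.
  move=> n; rewrite -(A_perm n i).
  have -> : n + i * k = i + (n + i * k - i).
    have : i <= i * k by rewrite leq_pmulr // kpos.
    lia.
  exact: c1.
have [n An] := exT.
by apply: notallT => m; rewrite c2 -(c2 n).
Qed.

Definition tt i := ex_minn (ex_trans i).

Lemma t_spec i : P i (tt i) /\ forall s, s < tt i -> ~~ P i s.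
Proof.
rewrite /tt; case: ex_minnP => m Pm minm; split=> // s sm; apply/negP => Ps.
have := minm s Ps; lia.
Qed.

Lemma t_char i a : P i a -> (forall s, s < a -> ~~ P i s) -> tt i = a.
Proof.
have [Pm minm] := t_spec i.
move=> Pa lt; apply/eqP; rewrite eqn_leq; apply/andP; split.
  rewrite leqNgt; apply/negP => H; by move: (minm _ H); rewrite Pa.
rewrite leqNgt; apply/negP => H; by move: (lt _ H); rewrite Pm.
Qed.

Lemma t_step i : ~~ P i 0 -> tt i = (tt (i+1)).+1.
Proof.
move=> h; have [P1 m1] := t_spec (i+1).
apply: t_char.
  by move: P1; rewrite /P -addnA add1n.
case=> [|s] // hs; have := m1 s hs.
by rewrite /P -addnA add1n.
Qed.

Lemma P_per i s : P (i + k) s = P i s.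
Proof. by rewrite /P addnAC -addSn !A_per. Qed.

Lemma t_per i : tt (i + k) = tt i.
Proof.
have [Pm minm] := t_spec i.
by apply: t_char; rewrite ?P_per // => s hs; rewrite P_per minm.
Qed.


Lemma run_even i : P i 0 -> ~~ odd (tt (i+1)).
Proof.
move=> Pi0.
have [Ps ms] := t_spec (i+1).
move: (tt (i+1)) Ps ms => s Ps ms.
have hc : forall u, u <= s -> A (i+1+u) = A (i+1).
  elim=> [|u IH] hu; first by rewrite addn0.
  rewrite addnS; have := ms u hu; rewrite /P negbK => /eqP <-.
  by apply: IH; apply: ltnW.
move: Pi0; rewrite /P addn0 -addn1.
case Ai1 : (A (i+1)) => /= Ai.
  have Ai' : A i = false by move: Ai; case: (A i).
  case: s Ps ms hc => [|[|[|s]]] //= Ps ms hc.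
  + exfalso; apply: nobull; apply: (@bull_at i) => //.
      have -> : i + 2 = i + 1 + 1 by lia.
      by rewrite hc.
    move: Ps; rewrite /P (hc 1) // Ai1.
    have -> : (i + 1 + 1).+1 = i + 3 by lia.
    by case: (A _).
  + exfalso; apply: (noanchor (b := A (i + 1 + 5))); apply: anchor_at => //.
    * by rewrite hc.
    * by rewrite hc.
    * by rewrite hc.
- apply/negP => os.
  have Ai0 : A i by move: Ai; case: (A i).
  have hF : forall m, 0 < m < s + 2 -> A (i+m) = false.
    move=> m hm; have -> : i + m = i + 1 + (m - 1) by lia.
    by rewrite hc //; lia.
  have AL : A (i + (s + 2)).
    move: Ps; rewrite /P (hc s) // Ai1.
    have -> : (i + 1 + s).+1 = i + (s + 2) by lia.
    by case: (A _).
  have hs := odd_double_half s; have hk := odd_double_half k.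
  rewrite os in hs; rewrite kodd in hk.
  rewrite -!muln2 /= in hs hk.
  have [Lk|kL] := leqP (s + 6) k.
  + have oL : odd (s+2) by rewrite oddD os.
    have L3 : 3 <= s + 2 by lia.
    have L4 : s + 2 + 4 <= k by lia.
    have [c' hc'] := short_hole oL L3 L4 Ai0 AL hF.
    have := shortest hc'; lia.
  + have [E1|[E2|E3]] : s + 4 = k \/ s + 2 = k \/ k < s + 2 by lia.
    * apply: notclean; apply: (@clean_of i (i + (k - 2))) => m mk Am.
      have [->|m0] := posnP m.
        by rewrite addn0 -idx_per; apply/or3P; apply: Or33; apply/eqP; congr idx; lia.
      have [ms2|ms2] := ltnP m (s+2); first by rewrite hF ?m0 in Am.
      have [m1|m1] := eqVneq m (k - 2).
        by rewrite m1 eqxx.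
      have -> : i + m = i + (k-2) + 1 by lia.
      by rewrite eqxx orbT.
    * apply: notclean; apply: (@clean_of i i) => m mk Am.
      have [->|m0] := posnP m; first by rewrite addn0 eqxx.
      by rewrite hF ?m0 in Am; lia.
    * have := hF k; rewrite A_per Ai0 => H.
      have : true = false by apply: H; lia.
      by [].
Qed.

Lemma final : False.
Proof.
pose x n := odd (tt n) (+) ~~ A n.
have step : forall n, x (n+1) = ~~ x n.
  move=> n; case hP: (P n 0).
  - have t0 : tt n = 0 by apply: t_char.
    have := run_even hP; move: hP; rewrite /x /P t0 addn0 addn1.
    by case: (A n); case: (A n.+1); case: (odd _).
  - have := t_step (negbT hP); move: hP; rewrite /x /P addn0 addn1 => hP ->.
    move/negbT: hP; rewrite negbK => /eqP <- /=.
    by case: (A n); case: (odd _).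
have xn : forall n, x n = x 0 (+) odd n.
  elim=> [|n IH]; first by rewrite addbF.
  by rewrite -addn1 step IH addn1 /= addbN.
have : x (0 + k) = x 0 by rewrite /x t_per A_per.
by rewrite add0n xn kodd; case: (x 0).
Qed.

End Hole.

Lemma exists_min (Q : nat -> Prop) : (exists n, Q n) -> exists n, Q n /\ forall m, Q m -> n <= m.
Proof.
case=> n; elim: n {-2}n (leqnn n) => [|n IH] m hm Qm.
  exists m; split=> // m' _; move: hm; rewrite leqn0 => /eqP ->; by [].
case: (classic (exists m', Q m' /\ m' < m)) => [[m' [Qm' lt]]|H].
  apply: (IH m') => //; lia.
exists m; split=> // m' Qm'; rewrite leqNgt; apply/negP => lt; apply: H; by exists m'.
Qed.

Lemma clean_main (T : finType) (e : rel T) :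
  simple_graph e ->
  ~ contains_induced C5 e ->
  ~ contains_induced bull e ->
  (forall b : bool, ~ contains_induced (anchor b) e) ->
  forall k (c : 'I_k -> T), shortest_odd_hole e c -> clean e c.
Proof.
move=> [esym eirr] noC5 nobull noanchor k c [[[k4 [cinj cadj]] kodd] sh] v vnot.
case: (classic (cleanv e c v)) => // hnc; exfalso.
have [k5|k5] := eqVneq k 5.
  subst k; apply: noC5; exists c; split => //.
have k7 : 7 <= k.
  rewrite leqNgt; apply/negP => hk.
  have : (k == 4) || (k == 6) by lia.
  by case/orP => /eqP hk'; rewrite hk' in kodd.
exact: (final esym eirr k7 cinj cadj vnot kodd nobull noanchor sh hnc).
Qed.

Theorem theorem2p1 (T : finType) (e : rel T) :
  simple_graph e ->
  ~ contains_induced C5 e ->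
  ~ contains_induced bull e ->
  (forall b : bool, ~ contains_induced (anchor b) e) ->
  pure e /\ (forall k (c : 'I_k -> T), shortest_odd_hole e c -> clean e c).
Proof.
move=> sg noC5 nobull noanchor.
have hcl := clean_main sg noC5 nobull noanchor.
split=> //.
case: (classic (has_odd_hole e)) => [[k0 [c0 h0]]|nh]; last by left.
right.
have [k [[c hc] hmin]] := @exists_min (fun n => exists c : 'I_n -> T, odd_hole e c)
  (ex_intro _ k0 (ex_intro _ c0 h0)).
exists k, c; split; last by apply: hcl; split => // k' c' h'; apply: hmin; exists c'.
split => // k' c' h'; apply: hmin; by exists c'.
Qed.
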